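(* Let $N$ be a lattice, $\sigma\subset N_{\mathbb R}$ a strongly convex rational polyhedral cone, and $\Delta$ a rational simplicial subdivision of $\sigma$ with ray generators $v_1,\ldots,v_s$. If $\lambda\in\Delta$ is a face of every maximal cone of $\Delta$, then $H_\Delta=H_{\operatorname{lk}\lambda}$, and $H_{\operatorname{lk}\gamma}=H_{\operatorname{lk}(\gamma+\lambda)}$ for every $\gamma\in\Delta$.
   Context: $v_1,\ldots,v_s$ are the primitive generators of the rays of $\Delta$, and $x^v$ ($v\in N$) denote monomials in the Laurent polynomial ring $\mathbb Z[N]$. ''$v_i\in\tau$'' means $v_i$ generates a ray of $\tau$. $H_\Delta=\sum_{\tau\in\Delta}\bigl(\prod_{v_i\in\tau}x^{v_i}\prod_{v_j\notin\tau}(1-x^{v_j})\bigr)$. The link $\operatorname{lk}\tau$ is the set of $\gamma\in\Delta$ with $\gamma\cap\tau=0$ and $\gamma+\tau\in\Delta$; $v_j\in\operatorname{lk}\tau$ means $v_j$ generates a ray of some cone of $\operatorname{lk}\tau$; $H_{\operatorname{lk}\tau}=\sum_{\gamma\in\operatorname{lk}\tau}\bigl(\prod_{v_i\in\gamma}x^{v_i}\prod_{v_j\in\operatorname{lk}\tau,\,v_j\notin\gamma}(1-x^{v_j})\bigr)$. *)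

(* Defs.v *)
From HB Require Import structures.
From mathcomp Require Import all_boot all_order all_algebra.
From mathcomp Require Import fraction.
From mathcomp Require Import mpoly.
Set Implicit Arguments. Unset Strict Implicit. Unset Printing Implicit Defensive.
Import Order.TTheory GRing.Theory Num.Theory.
Local Open Scope ring_scope.

(* The lattice N is Z^n, realised as 'rV[int]_n; N_R = 'rV[R]_n for a real
   field R.  Cones of the simplicial fan Delta are encoded by their sets of
   ray indices tau : {set 'I_s}; the cone is the nonnegative span of the
   v_i, i \in tau. *)

Definition toR (R : realFieldType) (n : nat) (v : 'rV[int]_n) : 'rV[R]_n :=
  map_mx (fun z : int => z%:~R) v.

Definition in_cone (R : realFieldType) (n : nat) (I : finType)
    (w : I -> 'rV[int]_n) (A : {set I}) (x : 'rV[R]_n) : Prop :=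
  exists c : I -> R, (forall i, 0 <= c i) /\
    x = \sum_(i in A) c i *: toR R (w i).

Definition strongly_convex (R : realFieldType) (n : nat) (I : finType)
    (w : I -> 'rV[int]_n) : Prop :=
  forall x : 'rV[R]_n, in_cone w [set: I] x -> in_cone w [set: I] (- x) -> x = 0.

Definition primitive (n : nat) (v : 'rV[int]_n) : Prop :=
  v != 0 /\ forall (k : int) (u : 'rV[int]_n), v = k *: u -> `|k| = 1.

Definition lin_indep (R : realFieldType) (n s : nat) (v : 'I_s -> 'rV[int]_n)
    (tau : {set 'I_s}) : Prop :=
  forall c : 'I_s -> R, \sum_(i in tau) c i *: toR R (v i) = 0 ->
    forall i, i \in tau -> c i = 0.

Definition simplicial_subdivision (R : realFieldType) (n m s : nat)
    (w : 'I_m -> 'rV[int]_n) (v : 'I_s -> 'rV[int]_n)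
    (Delta : {set {set 'I_s}}) : Prop :=
  (forall i, primitive (v i)) /\
      (forall i, [set i] \in Delta) /\
      (forall tau tau' : {set 'I_s}, tau \in Delta -> tau' \subset tau -> tau' \in Delta) /\
      (forall tau : {set 'I_s}, tau \in Delta -> lin_indep R v tau) /\
      (forall tau tau' : {set 'I_s}, tau \in Delta -> tau' \in Delta ->
         forall x : 'rV[R]_n,
           (in_cone v tau x /\ in_cone v tau' x) <-> in_cone v (tau :&: tau') x) /\
      (forall x : 'rV[R]_n,
         in_cone w [set: 'I_m] x <-> exists2 tau : {set 'I_s}, tau \in Delta & in_cone v tau x).

Definition maximal_cone (s : nat) (Delta : {set {set 'I_s}}) (tau : {set 'I_s}) :=
  (tau \in Delta) && [forall tau' in Delta, (tau \subset tau') ==> (tau' == tau)].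

Definition lk (s : nat) (Delta : {set {set 'I_s}}) (tau : {set 'I_s}) :
    {set {set 'I_s}} :=
  [set gam in Delta | (gam :&: tau == set0) && (gam :|: tau \in Delta)].

Definition rays_of (s : nat) (S : {set {set 'I_s}}) : {set 'I_s} :=
  \bigcup_(gam in S) gam.

(* Z[N] is realised inside the fraction field of Z[x_1,...,x_n]:
   x^v = prod_k x_k^(v_k) (Laurent monomial). *)
Definition ZN (n : nat) := {fraction {mpoly int[n]}}.

Definition monom (n : nat) (v : 'rV[int]_n) : ZN n :=
  \prod_(k < n) ((@FracField.tofrac _ ('X_k : {mpoly int[n]})) ^ (v ord0 k)).

Definition Hpoly (n s : nat) (v : 'I_s -> 'rV[int]_n)
    (S : {set {set 'I_s}}) (V : {set 'I_s}) : ZN n :=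
  \sum_(tau in S) ((\prod_(i in tau) monom (v i)) *
                   \prod_(j in V :\: tau) (1 - monom (v j))).

Definition H_Delta (n s : nat) (v : 'I_s -> 'rV[int]_n) (Delta : {set {set 'I_s}}) :=
  Hpoly v Delta [set: 'I_s].

Definition H_lk (n s : nat) (v : 'I_s -> 'rV[int]_n) (Delta : {set {set 'I_s}})
    (tau : {set 'I_s}) :=
  Hpoly v (lk Delta tau) (rays_of (lk Delta tau)).

(* Main.v *)
Require Import Defs.
From HB Require Import structures.
From mathcomp Require Import all_boot all_order all_algebra.
Set Implicit Arguments. Unset Strict Implicit. Unset Printing Implicit Defensive.
Local Open Scope ring_scope.
Import GRing.Theory.

Section Gen.
Variables (R : comRingType) (I : finType) (m : I -> R).

Definition Fp (V t : {set I}) : R :=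
  (\prod_(i in t) m i) * \prod_(j in V :\: t) (1 - m j).
Definition Hp (S : {set {set I}}) (V : {set I}) : R := \sum_(t in S) Fp V t.
Definition raysG (S : {set {set I}}) : {set I} := \bigcup_(g in S) g.

Lemma sub_sum (L : {set I}) : \sum_(mu : {set I} | mu \subset L) Fp L mu = 1.
Proof.
pose F i := if i \in L then m i else 0.
pose G i := if i \in L then 1 - m i else 1.
have e := @bigA_distr R 0 1 *%R +%R I F G.
rewrite /= in e.
have e1 : \prod_i (F i + G i) = 1.
  rewrite big1 // => i _; rewrite /F /G; case: (i \in L) => /=.
    by rewrite addrC subrK.
  by rewrite add0r.
rewrite e1 in e; rewrite e big_mkcond /=; apply: eq_bigr => J _.
rewrite (bigID (mem J)) /=.
case: ifP => JL.
  rewrite /Fp; congr (_ * _).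
    by apply: eq_bigr => i iJ; rewrite iJ /F (subsetP JL _ iJ).
  rewrite [RHS]big_mkcond [LHS]big_mkcond /=; apply: eq_bigr => i _.
  rewrite !inE /G; case: (i \in J); case: (i \in L) => //.
case/subsetPn: (negbT JL) => i iJ iL.
by rewrite (bigD1 i) //= iJ /F (negbTE iL) !mul0r.
Qed.

Lemma bigUs (A B : {set I}) (F : I -> R) : [disjoint A & B] ->
  \prod_(i in A :|: B) F i = (\prod_(i in A) F i) * \prod_(i in B) F i.
Proof. by move=> d; rewrite -bigU //; apply: eq_bigl => i; rewrite inE. Qed.

Lemma Fp_split (V L g mu : {set I}) : [disjoint V & L] -> g \subset V -> mu \subset L ->
  Fp (V :|: L) (g :|: mu) = Fp V g * Fp L mu.
Proof.
move=> dVL gV muL; rewrite /Fp.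
have dgm : [disjoint g & mu] by apply: disjointWl gV _; apply: disjointWr muL dVL.
rewrite bigUs //.
have -> : (V :|: L) :\: (g :|: mu) = (V :\: g) :|: (L :\: mu).
  apply/setP => x; rewrite !inE.
  have := disjointFr dVL (x:=x); have := subsetP gV x; have := subsetP muL x.
  case: (x \in V); case: (x \in L); case: (x \in g); case: (x \in mu) => //= h1 h2 h3.
  all: first [by have := h1 isT | by have := h2 isT | by have := h3 isT | idtac].
rewrite bigUs; last first.
  apply: disjointWl (subsetDl _ _) _; apply: disjointWr (subsetDl _ _) dVL.
by rewrite mulrACA.
Qed.

Lemma join (S T : {set {set I}}) (L : {set I}) :
  (forall g, g \in S -> [disjoint g & L]) ->
  (forall t, (t \in T) = (t :\: L \in S)) -> set0 \in S ->
  Hp T (raysG T) = Hp S (raysG S).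
Proof.
move=> hdis hT h0.
set V := raysG S.
have dVL : [disjoint V & L].
  rewrite disjoint_subset; apply/subsetP => x /bigcupP [g gS xg].
  by rewrite inE /= (disjointFr (hdis g gS) xg).
have rT : raysG T = V :|: L.
  apply/setP => x; apply/bigcupP/setUP.
    case=> t tT xt; case xL: (x \in L); first by right.
    left; apply/bigcupP; exists (t :\: L); first by rewrite -hT.
    by rewrite inE xL xt.
  case=> [/bigcupP [g gS xg] | xL].
    exists g => //; rewrite hT; by move/setDidPl: (hdis g gS) => ->.
  by exists L => //; rewrite hT setDv.
rewrite rT /Hp.
rewrite (partition_big (fun t => t :\: L) (mem S)) /=; last by move=> t; rewrite hT.
apply: eq_bigr => g gS.
rewrite (reindex_onto (fun mu => g :|: mu) (fun t => t :&: L)) /=; last first.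
  move=> t /andP [_ /eqP <-]; apply/setP => x; rewrite !inE.
  by case: (x \in t); case: (x \in L).
have dgL := hdis g gS.
rewrite (eq_bigl (fun mu : {set I} => mu \subset L)); last first.
  move=> mu; apply/idP/idP.
    by case/andP => _ /eqP <-; apply: subsetIr.
  move=> muL.
  have e1 : (g :|: mu) :\: L = g.
    apply/setP => x; rewrite !inE; case xg: (x \in g).
      by rewrite (disjointFr dgL xg).
    by case xm: (x \in mu); rewrite /= ?andbF // (subsetP muL _ xm).
  have e2 : (g :|: mu) :&: L = mu.
    apply/setP => x; rewrite !inE; case xm: (x \in mu).
      by rewrite (subsetP muL _ xm) orbT.
    by case xg: (x \in g); rewrite /= ?andbF // (disjointFr dgL xg).
  by rewrite hT e1 e2 gS !eqxx.
have gV : g \subset V by apply: (bigcup_sup g gS).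
rewrite (eq_bigr (fun mu : {set I} => Fp V g * Fp L mu)); last first.
  by move=> mu muL; rewrite Fp_split.
by rewrite -big_distrr /= sub_sum mulr1.
Qed.

End Gen.

Lemma pt0 (T : finType) (A : {set T}) x : A = set0 -> (x \in A) = false.
Proof. by move->; rewrite inE. Qed.

Theorem lemma2p1 (R : realFieldType) (n m s : nat)
    (w : 'I_m -> 'rV[int]_n) (v : 'I_s -> 'rV[int]_n)
    (Delta : {set {set 'I_s}}) (lam : {set 'I_s}) :
  strongly_convex R w ->
  simplicial_subdivision R w v Delta ->
  lam \in Delta ->
  (forall tau, maximal_cone Delta tau -> lam \subset tau) ->
  H_Delta v Delta = H_lk v Delta lam /\
  (forall gam, gam \in Delta -> H_lk v Delta gam = H_lk v Delta (gam :|: lam)).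
Proof.
move=> _ [_ [hsing [hclos _]]] lamD hmax.
have star : forall t, t \in Delta -> t :|: lam \in Delta.
  move=> t tD.
  pose P := [pred u : {set 'I_s} | (u \in Delta) && (t \subset u)].
  have Pt : P t by rewrite /= tD subxx.
  case: (arg_maxnP (fun u : {set 'I_s} => #|u|) Pt) => u /andP [uD tu] umax.
  have mu : maximal_cone Delta u.
    rewrite /maximal_cone uD; apply/forall_inP => u' u'D; apply/implyP => uu'.
    rewrite eq_sym eqEcard uu' /=; apply: umax.
    by rewrite /= u'D (subset_trans tu uu').
  by apply: (hclos u); rewrite // subUset tu hmax.
have set0D : set0 \in Delta by apply: (hclos lam) => //; apply: sub0set.
have gen : forall gam, gam \in Delta -> H_lk v Delta gam = H_lk v Delta (gam :|: lam).
  move=> gam gD.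
  rewrite /H_lk /Hpoly.
  apply: (@join _ _ (fun i => monom (v i)) _ _ (lam :\: gam)).
  - move=> d; rewrite inE => /and3P [_ /eqP d0 _].
    rewrite disjoint_subset; apply/subsetP => x xd; rewrite !inE.
    have := pt0 x d0; rewrite !inE xd /=.
    by case: (x \in gam); case: (x \in lam).
  - move=> t; rewrite /lk !inE; apply/and3P/and3P.
      case=> [tD /eqP t0 tgD]; split.
      + by apply: (hclos t) => //; apply: subsetDl.
      + apply/eqP/setP => x; have := pt0 x t0; rewrite !inE.
        by case: (x \in t); case: (x \in gam); case: (x \in lam).
      + apply: (hclos _ _ (star _ tgD)); apply/subsetP => x; rewrite !inE.
        by case: (x \in t); case: (x \in gam); case: (x \in lam).
    case=> [tLD /eqP t0 tLgD]; split.
    + apply: (hclos _ _ tLgD); apply/subsetP => x; rewrite !inE.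
      by case: (x \in t); case: (x \in gam); case: (x \in lam).
    + apply/eqP/setP => x; have := pt0 x t0; rewrite !inE.
      by case: (x \in t); case: (x \in gam); case: (x \in lam).
    + apply: (hclos _ _ tLgD); apply/subsetP => x; rewrite !inE.
      by case: (x \in t); case: (x \in gam); case: (x \in lam).
  - rewrite inE set0D set0I eqxx set0U /=.
    exact: star.
split => //.
have lk0 : lk Delta set0 = Delta.
  apply/setP => t; rewrite /lk inE setI0 eqxx setU0 /=.
  by case: (t \in Delta).
have r0 : rays_of Delta = [set: 'I_s].
  apply/setP => x; rewrite inE; apply/bigcupP; exists [set x]; [exact: hsing | exact: set11].
have e := gen set0 set0D; rewrite set0U in e; rewrite -e.
rewrite /H_lk lk0 r0. by rewrite /H_Delta.
Qed.
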